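(* Let $\mathbb{F}_q$ be a finite field and $n\geq 1$. Let $\overline{A}$ be an $\mathbb{F}_q$-subalgebra of $M_n(\mathbb{F}_q)$ such that $N_{\mathbb{F}_q}(\overline{A})=N_{\mathbb{F}_q}(M_n(\mathbb{F}_q))$. Then $\overline{A}=M_n(\mathbb{F}_q)$.
   Context: For a commutative ring $R$ and an $R$-algebra $C$, the null ideal is $N_R(C)=\{f\in R[X]\mid f(c)=0 \text{ for all } c\in C\}$. Subalgebras are unital (contain the identity matrix). *)

(* Defs.v *)
From HB Require Import structures.
From mathcomp Require Import all_boot all_order all_algebra all_field.
Set Implicit Arguments. Unset Strict Implicit. Unset Printing Implicit Defensive.
Import GRing.Theory.
Local Open Scope ring_scope.

Definition is_subalgebra (F : fieldType) (n : nat) (A : 'M[F]_n.+1 -> Prop) : Prop :=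
  [/\ A 1%:M,
      (forall a b, A a -> A b -> A (a + b)),
      (forall (c : F) a, A a -> A (c *: a))
    & (forall a b, A a -> A b -> A (a *m b))].

Definition null_ideal (F : fieldType) (n : nat) (C : 'M[F]_n.+1 -> Prop) :
  {poly F} -> Prop :=
  fun f => forall c, C c -> horner_mx c f = 0.

(* Main.v *)
Require Import Defs.
From Stdlib Require Import ClassicalDescription Classical.
From HB Require Import structures.
From mathcomp Require Import all_boot all_order all_algebra all_field all_fingroup.
From mathcomp Require Import zify.
Set Implicit Arguments. Unset Strict Implicit. Unset Printing Implicit Defensive.
Import GRing.Theory.
Local Open Scope ring_scope.
From mathcomp Require Import all_solvable.
Import FinRing.Theory.
Lemma card0 (F : finFieldType) : (#|F|%:R : F) = 0.
Proof.
have := @expg_cardG F [set: F] (1%R : F) (in_setT _).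
by rewrite cardsT zmodXgE.
Qed.

Lemma card_gt1 (F : finFieldType) : (1 < #|F|)%N.
Proof.
by rewrite (cardD1 0) (cardD1 1) !inE oner_eq0.
Qed.

Lemma size_XnX (R : nzRingType) m : (1 < m)%N -> size ('X^m - 'X : {poly R}) = m.+1.
Proof.
move=> m1; rewrite size_polyDl ?size_polyXn // size_polyN size_polyX ltnS //.
Qed.

Lemma exp_gt1 Q D : (1 < Q)%N -> (0 < D)%N -> (1 < Q ^ D)%N.
Proof.
move=> Q1; case: D => // d _; rewrite expnS; apply: (leq_trans Q1).
by rewrite leq_pmulr // expn_gt0 ltnW.
Qed.

Lemma exists_irr (F : finFieldType) (N : nat) : (0 < N)%N ->
  exists q : {poly F}, [/\ irreducible_poly q, q \is monic & size q = N.+1].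
Proof.
move=> N0.
set Q := #|F|; set m := (Q ^ N)%N.
have Q1 : (1 < Q)%N by apply: card_gt1.
have m1 : (1 < m)%N by rewrite /m (leq_trans Q1) // -{1}(expn1 Q) leq_pexp2l // ltnW.
pose p : {poly F} := 'X^m - 'X.
have szp : size p = m.+1 by apply: size_XnX.
have pnz : p != 0 by rewrite -size_poly_gt0 szp.
have [L [rs Dp defL]] := FinSplittingFieldFor pnz.
set pL := map_poly (in_alg L) p in Dp.
have mR : (m%:R : F) = 0 by rewrite /m /Q natrX card0 expr0n eqn0Ngt N0.
have dp : p^`() = -1.
  by rewrite /p derivB derivXn derivX -mulr_natr -polyC_natr mR mulr0 sub0r.
have seppL : separable_poly pL.
  rewrite /pL separable_map unlock /separable_poly dp.
  apply/coprimepP => d _; rewrite dvdpNr dvdp1 size_poly_eq1 //.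
have uniq_rs : uniq rs by rewrite -separable_prod_XsubC -(eqp_separable Dp).
have size_rs : size rs = m.
  by have := eqp_size Dp; rewrite size_prod_XsubC /pL size_map_poly szp => -[].
set D := \dim {:L}.
have rootpL : forall r, r \in rs -> r ^+ m = r.
  move=> r rsr; have : root pL r.
    by rewrite (eqp_root Dp) root_prod_XsubC rsr.
  have pLE : pL = 'X^m - 'X by rewrite /pL /p rmorphB /= map_polyXn map_polyX.
  by rewrite pLE /root !hornerE subr_eq0 => /eqP.
have Fer : forall a : L, a ^+ (Q ^ D)%N = a.
  by move=> a; apply/eqP; rewrite -(Fermat's_little_theorem {:L}%AS) memvf.
have D0 : (0 < D)%N by exact: (adim_gt0 {:L}%AS).
have QD1 : (1 < Q ^ D)%N := exp_gt1 Q1 D0.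
have ND : (N <= D)%N.
  have : (size rs < size (('X^((Q ^ D)%N) - 'X)%R : {poly L}))%N.
    apply: max_poly_roots => //.
    - by rewrite -size_poly_gt0 size_XnX.
    - by apply/allP => r _; rewrite /root !hornerE Fer subrr.
  rewrite size_rs size_XnX // ltnS /m leq_exp2l //. 
have [alpha genA Dalpha] := finField_galois_generator (sub1v {:L}%AS).
have Dalpha' : forall x : L, alpha x = x ^+ Q.
  by move=> x; rewrite Dalpha ?memvf // dimv1 expn1.
have alphaX : forall k (x : L), (alpha ^+ k)%g x = x ^+ (Q ^ k)%N.
  elim=> [|k IHk] x; first by rewrite expg0 gal_id expn0 expr1.
  by rewrite expgSr galM ?memvf // IHk Dalpha' -exprM expnSr.
have beta1 : (alpha ^+ N)%g = 1%g.
  apply/eqP/gal_eqP => x _; rewrite gal_id alphaX.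
  have : x \in fixedField [set (alpha ^+ N)%g].
    have : (<<1 & rs>> <= fixedField [set (alpha ^+ N)%g])%VS.
      apply/Fadjoin_seqP; split.
        apply/subvP => a a1; apply/fixedFieldP; first exact: memvf.
        have galA : alpha \in ('Gal({:L} / 1))%g by rewrite (eqP genA) cycle_id.
        by move=> b /set1P ->; apply: (fixed_gal (sub1v _)) => //; rewrite groupX.
      move=> r rsr; apply/fixedFieldP; first exact: memvf.
      by move=> b /set1P ->; rewrite alphaX rootpL.
    by rewrite defL => /subvP; apply; rewrite memvf.
  by case/mem_fixedFieldP => _ /(_ _ (set11 _)); rewrite alphaX.
have DN : (D %| N)%N.
  have : (#[alpha]%g %| N)%N by rewrite order_dvdn beta1.
  rewrite /order -(eqP genA) -galois_dim ?finField_galois ?sub1v //.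
  by rewrite dimv1 divn1.
have DeqN : D = N.
  apply/eqP; rewrite eqn_leq ND andbT; exact: dvdn_leq.
set x := separable_generator 1 {:L}.
have defx : {:L}%VS = <<1; x>>%VS.
  case/and3P: (finField_galois (sub1v {:L}%AS)) => _ sep _.
  exact: eq_adjoin_separable_generator sep (sub1v _).
have szm : size (minPoly 1 x) = N.+1.
  by rewrite size_minPoly adjoin_degreeE -defx dimv1 divn1 -/D DeqN.
have [q Dq] := polyOver1P (minPolyOver 1 x).
exists q.
have szq : size q = N.+1 by rewrite -szm Dq size_map_poly.
have mq : q \is monic by rewrite -(map_monic (in_alg L)) -Dq monic_minPoly.
split=> //; split; first by rewrite szq ltnS.
move=> d szd dq.
have := @minPoly_irr _ _ 1%AS x (map_poly (in_alg L) d).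
rewrite Dq eqp_map -size_poly_eq1 size_map_poly (negPf szd) orbF.
apply.
- by apply/polyOver1P; exists d.
- by rewrite dvdp_map.
Qed.

Lemma companion_root (F : fieldType) (k : nat) (q : {poly F}) :
  q \is monic -> size q = k.+2 -> exists C : 'M[F]_k.+1, horner_mx C q = 0.
Proof.
move=> mq szq.
have := companionmxK mq.
move: (companionmx q); rewrite szq /= => C HC.
by exists C; rewrite -[X in horner_mx _ X]HC Cayley_Hamilton.
Qed.

Section Sub.
Variables (F : finFieldType) (n : nat) (A : 'M[F]_n.+1 -> Prop).
Hypothesis hA : is_subalgebra A.

Lemma A1 : A 1%:M. Proof. by case: hA. Qed.
Lemma AD a b : A a -> A b -> A (a + b). Proof. by case: hA => _ h _ _; apply: h. Qed.
Lemma AZ c a : A a -> A (c *: a). Proof. by case: hA => _ _ h _; apply: h. Qed.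
Lemma AM a b : A a -> A b -> A (a * b).
Proof. by case: hA => _ _ _ h; rewrite -mulmxE; apply: h. Qed.
Lemma A0 : A 0. Proof. by rewrite -(scale0r 1%:M); apply: AZ; apply: A1. Qed.
Lemma ASUM (I : Type) (r : seq I) (P : pred I) (f : I -> 'M[F]_n.+1) :
  (forall i, P i -> A (f i)) -> A (\sum_(i <- r | P i) f i).
Proof.
move=> h; elim/big_rec: _ => [|i x Pi Ax]; first exact: A0.
by apply: AD => //; apply: h.
Qed.
Lemma Ahorner a p : A a -> A (horner_mx a p).
Proof.
move=> Aa; elim/poly_ind: p => [|p c IH].
  by rewrite rmorph0; apply: A0.
rewrite rmorphD rmorphM /= horner_mx_X horner_mx_C.
apply: AD; first by apply: AM.
by rewrite -scalemx1; apply: AZ; apply: A1.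
Qed.
End Sub.

Lemma fieldlike (F : fieldType) (n : nat) (M : 'M[F]_n.+1) (q : {poly F}) :
  irreducible_poly q -> size q = n.+2 -> horner_mx M q = 0 ->
  forall p : {poly F}, p != 0 -> (size p <= n.+1)%N ->
  exists s, horner_mx M s * horner_mx M p = 1 /\ horner_mx M p * horner_mx M s = 1.
Proof.
move=> irq szq qM p pnz szp.
have : coprimep q p.
  rewrite irreducible_poly_coprime //; apply/negP => /(dvdp_leq pnz).
  by rewrite szq leqNgt ltnS szp.
case/Bezout_eq1_coprimepP => [[u v]] /= Duv.
have H : horner_mx M v * horner_mx M p = 1.
  by rewrite -rmorphM -[LHS]add0r -(mulr0 (horner_mx M u)) -qM -rmorphM -rmorphD Duv rmorph1.
exists v; split => //.
by rewrite -rmorphM mulrC rmorphM.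
Qed.

Lemma col_onto (F : finFieldType) (n : nat) (A : 'M[F]_n.+1 -> Prop) (M : 'M[F]_n.+1) :
  is_subalgebra A -> A M ->
  (forall p : {poly F}, p != 0 -> (size p <= n.+1)%N ->
    exists s, horner_mx M s * horner_mx M p = 1 /\ horner_mx M p * horner_mx M s = 1) ->
  forall u : 'cV[F]_n.+1, u != 0 -> forall w, exists X, A X /\ X *m u = w.
Proof.
move=> hA AM0 fl u unz w.
pose phi (d : 'rV[F]_n.+1) := horner_mx M (rVpoly d) *m u.
have inj : injective phi.
  move=> d1 d2 /eqP; rewrite -subr_eq0 /phi -mulmxBl -rmorphB -linearB /=.
  set p := rVpoly _; have [p0|pnz] := eqVneq p 0.
    by move=> _; apply/eqP; rewrite -subr_eq0 -[_ - _]rVpolyK -/p p0 linear0.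
  have [s [hs _]] := fl p pnz (size_poly _ _).
  move=> /eqP H.
  have : (horner_mx M s * horner_mx M p) *m u = 0 by rewrite -mulmxE -mulmxA H mulmx0.
  by rewrite hs mul1mx => u0; rewrite u0 eqxx in unz.
have := inj_card_onto inj; rewrite !card_mx mulnC leqnn => /(_ isT w) /codomP [d ->].
exists (horner_mx M (rVpoly d)); split => //; exact: Ahorner.
Qed.

Lemma row_onto (F : finFieldType) (n : nat) (A : 'M[F]_n.+1 -> Prop) (M : 'M[F]_n.+1) :
  is_subalgebra A -> A M ->
  (forall p : {poly F}, p != 0 -> (size p <= n.+1)%N ->
    exists s, horner_mx M s * horner_mx M p = 1 /\ horner_mx M p * horner_mx M s = 1) ->
  forall v : 'rV[F]_n.+1, v != 0 -> forall w, exists X, A X /\ v *m X = w.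
Proof.
move=> hA AM0 fl v vnz w.
pose phi (d : 'rV[F]_n.+1) := v *m horner_mx M (rVpoly d).
have inj : injective phi.
  move=> d1 d2 /eqP; rewrite -subr_eq0 /phi -mulmxBr -rmorphB -linearB /=.
  set p := rVpoly _; have [p0|pnz] := eqVneq p 0.
    by move=> _; apply/eqP; rewrite -subr_eq0 -[_ - _]rVpolyK -/p p0 linear0.
  have [s [_ hs]] := fl p pnz (size_poly _ _).
  move=> /eqP H.
  have : v *m (horner_mx M p * horner_mx M s) = 0 by rewrite -mulmxE mulmxA H mul0mx.
  by rewrite hs mulmx1 => v0; rewrite v0 eqxx in vnz.
have := inj_card_onto inj; rewrite !card_mx leqnn => /(_ isT w) /codomP [d ->].
exists (horner_mx M (rVpoly d)); split => //; exact: Ahorner.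
Qed.

Definition asb (P : Prop) : bool := if excluded_middle_informative P then true else false.
Lemma asbP (P : Prop) : reflect P (asb P).
Proof. by rewrite /asb; case: excluded_middle_informative => h; constructor. Qed.

Lemma irr_dvd_prod (R : idomainType) (q : {poly R}) (I : Type) (r : seq I)
  (P : pred I) (g : I -> {poly R}) :
  irreducible_poly q -> q %| \prod_(i <- r | P i) g i -> exists2 i, P i & q %| g i.
Proof.
move=> irq; elim: r => [|i r IH].
  rewrite big_nil dvdp1 => /eqP szq.
  by case: irq; rewrite szq.
rewrite big_cons; case: ifP => Pi; last exact: IH.
have [qg|nqg] := boolP (q %| g i); first by exists i.
by rewrite Gauss_dvdpr ?irreducible_poly_coprime.
Qed.

Lemma exists_root (F : finFieldType) (n : nat) (A : 'M[F]_n.+1 -> Prop) (q : {poly F}) (C : 'M[F]_n.+1) :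
  (forall f : {poly F}, null_ideal A f <-> null_ideal (fun _ : 'M[F]_n.+1 => True) f) ->
  irreducible_poly q -> size q = n.+2 -> horner_mx C q = 0 ->
  exists M, A M /\ horner_mx M q = 0.
Proof.
move=> Hnull irq szq qC.
pose f := \prod_(M : 'M[F]_n.+1 | asb (A M)) mxminpoly M.
have fA : null_ideal A f.
  move=> c Ac; rewrite /f (bigD1 c) /=; last by apply/asbP.
  by rewrite rmorphM /= mx_root_minpoly mul0r.
have fC : horner_mx C f = 0 by apply: (proj1 (Hnull f) fA).
have mCq : mxminpoly C %= q.
  case: irq => _ /(_ (mxminpoly C)); apply.
    by rewrite size_mxminpoly eqSS -lt0n mxminpoly_nonconstant.
  exact: mxminpoly_min.
have qf : q %| f by rewrite -(eqp_dvdl _ mCq); apply: mxminpoly_min.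
have [M /asbP AM qM] := irr_dvd_prod irq qf.
exists M; split => //.
have mnz : mxminpoly M != 0 by rewrite monic_neq0 // mxminpoly_monic.
have szm : (size (mxminpoly M) <= n.+2)%N.
  by rewrite -(size_char_poly M) dvdp_leq ?mxminpoly_dvd_char // monic_neq0 // char_poly_monic.
have : q %= mxminpoly M.
  by rewrite -dvdp_size_eqp // eqn_leq dvdp_leq // szq.
by move/eqp_dvdl => /(_ q); rewrite dvdpp => /esym/mxminpoly_minP.
Qed.

Definition shiftmx (F : fieldType) (N : nat) : 'M[F]_N := \matrix_(i, j) ((i.+1 == j)%:R).

Lemma shiftmxX (F : fieldType) (N : nat) k (i j : 'I_N) :
  ((shiftmx F N) ^+ k) i j = ((i + k)%N == j)%:R.
Proof.
elim: k i j => [|k IH] i j.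
  by rewrite expr0 mxE addn0; reflexivity.
rewrite exprS -mulmxE mxE.
have [h|h] := ltnP i.+1 N.
  rewrite (bigD1 (Ordinal h)) //= big1 ?addr0.
    by rewrite !mxE eqxx mul1r IH addSnnS.
  move=> l /negPf nl; rewrite mxE.
  suff -> : (i.+1 == l) = false by rewrite mul0r.
  by apply/negP => /eqP E; move: nl; rewrite -val_eqE /= E eqxx.
rewrite big1.
  case: eqP => // E; have := ltn_ord j; rewrite -E; move: h.
  by rewrite -addSnnS => h; rewrite ltnNge (leq_trans h) // leq_addr.
move=> l _; rewrite mxE.
suff -> : (i.+1 == l) = false by rewrite mul0r.
by apply/negP => /eqP E; have := ltn_ord l; rewrite -E ltnNge h.
Qed.

Lemma shiftmx_nil (F : fieldType) (n : nat) : (shiftmx F n.+1) ^+ n.+1 = 0.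
Proof.
apply/matrixP => i j; rewrite shiftmxX mxE.
case: eqP => // E; have := ltn_ord j; rewrite -E.
by rewrite ltnNge leq_addl.
Qed.

Lemma shiftmx_neq0 (F : fieldType) (n : nat) : (shiftmx F n.+1) ^+ n != 0.
Proof.
apply/eqP => /matrixP /(_ 0 ord_max); rewrite shiftmxX mxE /= add0n eqxx.
by move/eqP; rewrite oner_eq0.
Qed.

Definition Kexp (F : finFieldType) (n : nat) := (#|{: 'M[F]_n.+1}|)`!.

Lemma Kexp_gt0 F n : (0 < Kexp F n)%N. Proof. exact: fact_gt0. Qed.

Lemma idem_pow (F : finFieldType) (n : nat) (c : 'M[F]_n.+1) :
  c ^+ (Kexp F n + Kexp F n) = c ^+ Kexp F n.
Proof.
set T := #|{: 'M[F]_n.+1}|.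
pose f (i : 'I_T.+1) := c ^+ i.
have : ~~ injectiveb f.
  apply/negP => /injectiveP /leq_card; rewrite card_ord.
  by rewrite ltnn.
case/injectivePn => i [j neq fij].
have [i' [j' [lt_ij le_jT E]]] : exists i' j', [/\ (i' < j')%N, (j' <= T)%N & c ^+ i' = c ^+ j'].
  case: (ltngtP i j) => h.
  - by exists i, j; split => //; rewrite -ltnS.
  - by exists j, i; split => //; rewrite -ltnS.
  - by move/val_inj: h neq => ->; rewrite eqxx.
set p := (j' - i')%N.
have p0 : (0 < p)%N by rewrite subn_gt0.
have per1 : forall k, (i' <= k)%N -> c ^+ (k + p) = c ^+ k.
  move=> k ik; rewrite -(subnK ik) -addnA subnKC ?(ltnW lt_ij) //.
  by rewrite exprD -E -exprD.
have per : forall t k, (i' <= k)%N -> c ^+ (k + t * p) = c ^+ k.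
  elim=> [|t IH] k ik; first by rewrite mul0n addn0.
  rewrite mulSn addnA IH; first exact: per1.
  by rewrite (leq_trans ik) // leq_addr.
have pK : (p %| Kexp F n)%N.
  apply: dvdn_fact; rewrite p0 /=.
  by rewrite (leq_trans (leq_subr _ _)).
rewrite -{2}(divnK pK) per //.
rewrite (leq_trans _ (fact_geq _)) // (leq_trans (ltnW lt_ij)) //.
Qed.

Lemma AX (F : finFieldType) (n : nat) (A : 'M[F]_n.+1 -> Prop) c k :
  is_subalgebra A -> A c -> A (c ^+ k).
Proof.
move=> hA Ac; elim: k => [|k IH]; first by rewrite expr0; apply: A1.
by rewrite exprS; apply: AM.
Qed.

Lemma exists_nil (F : finFieldType) (n : nat) (A : 'M[F]_n.+1 -> Prop) :
  is_subalgebra A ->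
  (forall f : {poly F}, null_ideal A f <-> null_ideal (fun _ : 'M[F]_n.+1 => True) f) ->
  exists b, [/\ A b, (exists k, b ^+ k = 0) & b ^+ n != 0].
Proof.
move=> hA Hnull; apply: NNPP => Hno.
set K := Kexp F n.
have K0 : (0 < K)%N := Kexp_gt0 F n.
have key : forall c, A c -> c ^+ n * c ^+ K = c ^+ n.
  move=> c Ac; set e := c ^+ K.
  have ee : e * e = e by rewrite /e -exprD idem_pow.
  set b := c - c * e.
  have Ab : A b.
    apply: AD => //; rewrite -scaleN1r; apply: AZ => //.
    by apply: AM => //; apply: AX.
  have ide : forall k, (1 - e) ^+ k.+1 = 1 - e.
    elim=> [|k IH]; first by rewrite expr1.
    by rewrite exprS IH mulrBr mulr1 mulrBl mul1r ee subrr subr0.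
  have cm : GRing.comm c (1 - e).
    by apply: commrB; [apply: commr1 | apply: commrX; apply: commr_refl].
  have bE : b = c * (1 - e) by rewrite /b mulrBr mulr1.
  have bK : b ^+ K = 0.
    rewrite bE exprMn_comm // -(prednK K0) ide (prednK K0) -/e.
    by rewrite mulrBr mulr1 ee subrr.
  have bn : b ^+ n = 0.
    apply: NNPP => bn; apply: Hno; exists b; split => //; first by exists K.
    by apply/eqP.
  have : c ^+ n * (1 - e) = 0.
    by rewrite -(ide n) exprSr mulrA -exprMn_comm // -bE bn mul0r.
  by rewrite mulrBr mulr1 => /eqP; rewrite subr_eq0 => /eqP <-.
pose g : {poly F} := 'X^n * ('X^K - 1).
have gA : null_ideal A g.
  move=> c Ac; rewrite /g rmorphM rmorphB /= rmorph1 !rmorphXn /= !horner_mx_X.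
  by rewrite mulrBr mulr1 key // subrr.
set J := shiftmx F n.+1.
have gJ : J ^+ n * J ^+ K = J ^+ n.
  have := proj1 (Hnull g) gA J I.
  rewrite /g rmorphM rmorphB /= rmorph1 !rmorphXn /= !horner_mx_X mulrBr mulr1.
  by move/eqP; rewrite subr_eq0 => /eqP.
have gJt : forall t, J ^+ n * J ^+ (t * K) = J ^+ n.
  elim=> [|t IH]; first by rewrite mul0n expr0 mulr1.
  by rewrite mulSn exprD mulrA gJ IH.
have := gJt n.+1.
have big : (n.+1 <= n.+1 * K)%N by rewrite leq_pmulr.
rewrite -(subnK big) exprD shiftmx_nil mulr0 mulr0 => /esym/eqP.
by rewrite (negPf (shiftmx_neq0 F n)).
Qed.

Lemma powS_neq0 (F : fieldType) (n : nat) (b : 'M[F]_n.+1) k j :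
  (k <= j)%N -> b ^+ j != 0 -> b ^+ k != 0.
Proof.
move=> kj; apply: contraNneq => bk.
by rewrite -(subnK kj) exprD bk mulr0.
Qed.

Lemma rank_one (F : fieldType) (n : nat) (b : 'M[F]_n.+1) :
  (exists k, b ^+ k = 0) -> b ^+ n != 0 -> \rank (b ^+ n) = 1%N.
Proof.
move=> [m bm] bn.
have strict : forall k, b ^+ k.+1 != 0 -> (\rank (b ^+ k.+1) < \rank (b ^+ k))%N.
  move=> k bk1.
  have sub : (b ^+ k.+1 <= b ^+ k)%MS by rewrite exprS -mulmxE submxMl.
  rewrite (ltn_leqif (mxrank_leqif_sup sub)); apply/negP => sub2.
  have chain : forall t, (b ^+ k <= b ^+ (k + t))%MS.
    elim=> [|t IH]; first by rewrite addn0.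
    apply: submx_trans IH _.
    have := submxMr (b ^+ t) sub2; rewrite !mulmxE -!exprD addSn.
    by rewrite addnS.
  have := chain m; rewrite exprD bm mulr0 submx0 => /eqP bk0.
  by move: bk1; rewrite exprSr bk0 mul0r eqxx.
have bound : forall k, (k <= n)%N -> (\rank (b ^+ k) + k <= n.+1)%N.
  elim=> [|k IH] kn; first by rewrite expr0 addn0 rank_leq_row.
  have h1 := strict k (powS_neq0 kn bn).
  have h2 := IH (ltnW kn).
  lia.
have h := bound n (leqnn n).
have h0 : (0 < \rank (b ^+ n))%N by rewrite lt0n mxrank_eq0.
lia.
Qed.

Unset Implicit Arguments.

(* Matrices of size n.+1, i.e. the paper's n >= 1. *)
Theorem mainTheorem5 (F : finFieldType) (n : nat) (A : 'M[F]_n.+1 -> Prop) :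
  is_subalgebra A ->
  (forall f : {poly F}, null_ideal A f <-> null_ideal (fun _ : 'M[F]_n.+1 => True) f) ->
  forall M : 'M[F]_n.+1, A M.
Proof.
move=> hA Hnull M.
have [q [irq mq szq]] := @exists_irr F n.+1 isT.
have [C qC] := companion_root mq szq.
have [M0 [AM0 qM0]] := exists_root Hnull irq szq qC.
have fl := fieldlike irq szq qM0.
have [b [Ab bnil bn]] := exists_nil hA Hnull.
set e := b ^+ n.
have Ae : A e by apply: AX.
have r1 : \rank e = 1%N by apply: rank_one.
pose u : 'M[F]_(n.+1, 1) := col_ebase e *m pid_mx 1.
pose v : 'M[F]_(1, n.+1) := pid_mx 1 *m row_ebase e.
have euv : e = u *m v.
  rewrite /u /v -{1}(mulmx_ebase e) r1 !mulmxA; congr (_ *m _).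
  by rewrite -mulmxA mul_pid_mx.
have unz : u != 0 by apply: contraNneq bn => u0; rewrite -/e euv u0 mul0mx.
have vnz : v != 0 by apply: contraNneq bn => v0; rewrite -/e euv v0 mulmx0.
clearbody u v.
have Adelta : forall i j, A (delta_mx i j).
  move=> i j.
  have [X [AX0 Xu]] := col_onto hA AM0 fl unz (delta_mx i 0).
  have [Y [AY Yv]] := row_onto hA AM0 fl vnz (delta_mx 0 j).
  have -> : delta_mx i j = X * e * Y.
    by rewrite -!mulmxE euv !mulmxA Xu -mulmxA Yv mul_delta_mx.
  by apply: AM => //; apply: AM.
rewrite (matrix_sum_delta M).
apply: ASUM => // i _; apply: ASUM => // j _.
by apply: AZ => //; apply: Adelta.
Qed.
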